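(* If $(X,\Pi)$ is a finite quasiconcave quasisubmodular aggregative game for which a fESS exists, then imitation is not subject to a money pump.
   Context: An aggregative game $(X,\Pi)$ consists of: a totally ordered action set $X$ and a totally ordered set $Z$; a symmetric aggregator $a:X\times X\to Z$ ($a(x,y)=a(y,x)$) that is monotone increasing (if $x''\ge x'$, $y''\ge y'$ and $(x'',y'')\neq(x',y')$ then $a(x'',y'')>a(x',y')$); and $\Pi:X\times Z\to\mathbb{R}$; the underlying symmetric two-player game has payoff $\pi(x,y)=\Pi(x,a(x,y))$. Finite means $X$ finite. Quasisubmodular: for all $z''>z'$ and $x''>x'$, $\Pi(x'',z'')-\Pi(x',z'')\ge0\Rightarrow\Pi(x'',z')-\Pi(x',z')\ge0$ and the same with $>0$ in both places. Quasiconcave: for all $x<x'<x''$ and $z$, $\Pi(x',z)\ge\min\{\Pi(x,z),\Pi(x'',z)\}$. fESS: $x^*$ with $\Pi(x^*,a(x^*,x))\ge\Pi(x,a(x^*,x))$ for all $x\in X$. Relative payoff: $\Delta(x,y)=\pi(x,y)-\pi(y,x)$. Imitate-the-best: given initial $y_0\in X$ and any opponent sequence $(x_t)_{t\ge0}$, $y_t=x_{t-1}$ if $\Delta(x_{t-1},y_{t-1})>0$ and $y_t=y_{t-1}$ otherwise. Imitation is not subject to a money pump if there is $M\in\mathbb{R}_+$ such that for every $y_0\in X$ and every sequence $(x_t)$, $\limsup_{T\to\infty}\sum_{t=0}^T\Delta(x_t,y_t)\le M$. *)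

(* Defs.v *)
From HB Require Import structures.
From mathcomp Require Import all_boot all_order all_algebra.
From mathcomp Require Import all_classical all_reals all_analysis.
Set Implicit Arguments. Unset Strict Implicit. Unset Printing Implicit Defensive.
Import Order.TTheory GRing.Theory Num.Theory.
Local Open Scope ring_scope.

Section Defs.
Context {R : realType} {dX dZ : Order.disp_t}
  {X : finOrderType dX} {Z : orderType dZ}.

Definition agg_symmetric (a : X -> X -> Z) : Prop :=
  forall x y, a x y = a y x.

Definition agg_monotone (a : X -> X -> Z) : Prop :=
  forall x' x'' y' y'', (x' <= x'')%O -> (y' <= y'')%O ->
    (x'', y'') <> (x', y') -> (a x' y' < a x'' y'')%O.

Definition quasisubmodular (Pi : X -> Z -> R) : Prop :=
  forall (z' z'' : Z) (x' x'' : X), (z' < z'')%O -> (x' < x'')%O ->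
    (0 <= Pi x'' z'' - Pi x' z'' -> 0 <= Pi x'' z' - Pi x' z') /\
    (0 < Pi x'' z'' - Pi x' z'' -> 0 < Pi x'' z' - Pi x' z').

Definition quasiconcave (Pi : X -> Z -> R) : Prop :=
  forall (x x' x'' : X) (z : Z), (x < x')%O -> (x' < x'')%O ->
    Num.min (Pi x z) (Pi x'' z) <= Pi x' z.

Definition payoff (a : X -> X -> Z) (Pi : X -> Z -> R) (x y : X) : R :=
  Pi x (a x y).

Definition fESS (a : X -> X -> Z) (Pi : X -> Z -> R) (xs : X) : Prop :=
  forall x : X, Pi x (a xs x) <= Pi xs (a xs x).

Definition rel_payoff (a : X -> X -> Z) (Pi : X -> Z -> R) (x y : X) : R :=
  payoff a Pi x y - payoff a Pi y x.

Fixpoint imitate (a : X -> X -> Z) (Pi : X -> Z -> R) (y0 : X)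
    (xs : nat -> X) (t : nat) : X :=
  match t with
  | 0 => y0
  | t'.+1 => let y := imitate a Pi y0 xs t' in
             if 0 < rel_payoff a Pi (xs t') y then xs t' else y
  end.

Definition no_money_pump (a : X -> X -> Z) (Pi : X -> Z -> R) : Prop :=
  exists M : R, 0 <= M /\
    forall (y0 : X) (xs : nat -> X),
      (limn_esup (fun T : nat =>
         ((\sum_(0 <= t < T.+1) rel_payoff a Pi (xs t) (imitate a Pi y0 xs t))%:E))
       <= M%:E)%E.

End Defs.

(* Main.v *)
Require Import Defs.
From HB Require Import structures.
From mathcomp Require Import all_boot all_order all_algebra.
From mathcomp Require Import all_classical all_reals all_analysis.
From mathcomp Require Import lra.
Import Order.TTheory GRing.Theory Num.Theory.
Local Open Scope ring_scope.

Lemma esup_le_aux (R : realType) (u : (\bar R)^nat) (M : \bar R) :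
  (forall n, u n <= M)%E -> (limn_esup u <= M)%E.
Proof.
move=> H; rewrite limn_esup_lim; apply: lime_le; first exact: is_cvg_esups.
apply: nearW => n; apply: ub_ereal_sup => _ [k _ <-]; exact: H.
Qed.

Section Game.
Variables (R : realType) (dX dZ : Order.disp_t)
  (X : finOrderType dX) (Z : orderType dZ)
  (a : X -> X -> Z) (Pi : X -> Z -> R).
Hypothesis hsym : agg_symmetric a.
Hypothesis hmon : agg_monotone a.
Hypothesis hqc : quasiconcave Pi.
Hypothesis hqs : quasisubmodular Pi.

Local Notation D := (rel_payoff a Pi).

Lemma DE x y : D x y = Pi x (a x y) - Pi y (a x y).
Proof. by rewrite /rel_payoff /payoff (hsym y x). Qed.

Lemma qc' (x x' x'' : X) z : (x < x')%O -> (x' < x'')%O ->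
  Pi x z <= Pi x' z \/ Pi x'' z <= Pi x' z.
Proof.
move=> h1 h2; have := @hqc x x' x'' z h1 h2; rewrite ge_min => /orP[]; by [left|right].
Qed.

Lemma crossX (m p q M : X) : (m <= p)%O -> (p < q)%O -> (q <= M)%O ->
  0 < D M p -> 0 < D m q -> False.
Proof.
move=> hmp hpq hqM h1 h2.
have g1 : Pi q (a m q) < Pi m (a m q) by move: h2; rewrite DE subr_gt0.
have g2 : Pi p (a p M) < Pi M (a p M) by move: h1; rewrite DE (hsym M p) subr_gt0.
have hpM : (p < M)%O by exact: lt_le_trans hpq hqM.
have hmq : (m < q)%O by exact: le_lt_trans hmp hpq.
have B : Pi q (a m q) <= Pi p (a m q).
  case: (eqVneq m p) => [<-|hne]; first exact: ltW.
  have hmp' : (m < p)%O by rewrite lt_neqAle hne hmp.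
  case: (@qc' m p q (a m q) hmp' hpq) => h //; exact: le_trans (ltW g1) h.
have A : Pi p (a m q) < Pi M (a m q).
  case: (eqVneq (m, q) (p, M)) => [[-> ->]|hne] //.
  have hz : (a m q < a p M)%O.
    apply: hmon => //; by move=> E; rewrite E eqxx in hne.
  have := (@hqs _ _ _ _ hz hpM).2; rewrite !subr_gt0; apply; exact: g2.
case: (eqVneq q M) => [E|hne]; first by subst q; move: (lt_le_trans A B); rewrite ltxx.
have hqM' : (q < M)%O by rewrite lt_neqAle hne hqM.
case: (@qc' m q M (a m q) hmq hqM') => h.
  by move: (le_lt_trans h g1); rewrite ltxx.
by move: (lt_le_trans (le_lt_trans B A) h); rewrite ltxx.
Qed.


Lemma Dxx x : D x x = 0.
Proof. by rewrite DE subrr. Qed.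

Lemma Dskew x y : D y x = - D x y.
Proof. by rewrite !DE (hsym y x) opprB. Qed.

Definition Dm : R := \sum_(pr : X * X) `|D pr.1 pr.2|.

Lemma Dm_ge0 : 0 <= Dm.
Proof. by apply: sumr_ge0 => pr _; exact: normr_ge0. Qed.

Lemma D_le x y : D x y <= Dm.
Proof.
rewrite /Dm (bigD1 (x, y)) //=.
have h1 : 0 <= \sum_(pr | pr != (x, y)) `|D pr.1 pr.2|.
  by apply: sumr_ge0 => pr _; exact: normr_ge0.
apply: le_trans (ler_norm _) _; by rewrite lerDl.
Qed.

Section Fess.
Variable s : X.
Hypothesis hf : fESS a Pi s.

Lemma Ds x : D x s <= 0.
Proof. by rewrite DE (hsym x s) subr_le0; exact: hf. Qed.

Lemma noDown x y : (y <= s)%O -> (x < y)%O -> D x y <= 0.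
Proof.
move=> hys hxy; case: (eqVneq y s) => [->|hne]; first exact: Ds.
have hys' : (y < s)%O by rewrite lt_neqAle hne hys.
rewrite DE leNgt; apply/negP => hpos.
have hxs : (x < s)%O := lt_trans hxy hys'.
have hz : (a x y < a x s)%O.
  apply: hmon; [exact: lexx | exact: ltW hys' | ].
  by case=> E; rewrite E eqxx in hne.
have hfx := hf x; rewrite (hsym s x) in hfx.
have := (@hqs _ _ _ _ hz hxs).1.
rewrite subr_ge0 => /(_ hfx); rewrite subr_ge0 => H.
rewrite subr_gt0 in hpos.
case: (@qc' x y s (a x y) hxy hys') => h.
  by move: (le_lt_trans h hpos); rewrite ltxx.
by move: (lt_le_trans (le_lt_trans h hpos) H); rewrite ltxx.
Qed.

Lemma noUp x y : (s <= y)%O -> (y < x)%O -> D x y <= 0.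
Proof.
move=> hsy hyx; case: (eqVneq y s) => [->|hne]; first exact: Ds.
have hsy' : (s < y)%O by rewrite lt_neqAle eq_sym hne hsy.
rewrite DE leNgt; apply/negP => hpos.
have hsx : (s < x)%O := lt_trans hsy' hyx.
have hz : (a s x < a x y)%O.
  rewrite (hsym x y); apply: hmon; [exact: ltW hsy' | exact: lexx | ].
  by case=> E; rewrite E eqxx in hne.
have hfx := hf x.
have := (@hqs _ _ _ _ hz hsx).2.
rewrite !subr_gt0 => H.
rewrite subr_gt0 in hpos.
case: (@qc' s y x (a x y) hsy' hyx) => h.
- have := H (le_lt_trans h hpos) => h'.
  by move: (lt_le_trans h' hfx); rewrite ltxx.
- by move: (lt_le_trans hpos h); rewrite ltxx.
Qed.

Lemma up_of x y : (y < s)%O -> 0 < D x y -> (y < x)%O.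
Proof.
move=> hys hpos; case: (ltgtP y x) => // [hxy|hxy].
- by have := @noDown x y (ltW hys) hxy; rewrite leNgt hpos.
- by move: hpos; rewrite hxy Dxx ltxx.
Qed.

Lemma down_of x y : (s < y)%O -> 0 < D x y -> (x < y)%O.
Proof.
move=> hsy hpos; case: (ltgtP y x) => // [hxy|hxy].
- by have := @noUp x y (ltW hsy) hxy; rewrite leNgt hpos.
- by move: hpos; rewrite hxy Dxx ltxx.
Qed.

Lemma not_s x y : 0 < D x y -> y <> s.
Proof. by move=> hpos E; move: hpos; rewrite E ltNge Ds. Qed.

Variables (y0 : X) (xs : nat -> X).
Local Notation Y := (imitate a Pi y0 xs).

Lemma step_cases t : Y t.+1 = Y t \/ 0 < D (Y t.+1) (Y t).
Proof. by rewrite /=; case: ifP => h; [right|left]. Qed.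

Definition Inv t : Prop :=
 (forall i, (i <= t)%N -> Y i = s -> Y t = s) /\
 ((Y t < s)%O -> forall i, (i <= t)%N ->
    ((Y i < s)%O -> (Y i <= Y t)%O) /\
    ((s < Y i)%O -> exists q m, [/\ (s < q)%O, (q <= Y i)%O, (m <= Y t)%O & 0 < D m q])) /\
 ((s < Y t)%O -> forall i, (i <= t)%N ->
    ((s < Y i)%O -> (Y t <= Y i)%O) /\
    ((Y i < s)%O -> exists p M, [/\ (Y i <= p)%O, (p < s)%O, (Y t <= M)%O & 0 < D M p])).

Lemma Inv0 : Inv 0.
Proof.
split; first by move=> i; rewrite leqn0 => /eqP->.
split=> h i; rewrite leqn0 => /eqP->; split; try (move=> _; exact: lexx);
  by move=> h'; move: (lt_trans h h'); rewrite ltxx.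
Qed.

Lemma InvS t : Inv t -> Inv t.+1.
Proof.
move=> [He [HL HR]].
have Hi : forall i, (i <= t.+1)%N -> i = t.+1 \/ (i <= t)%N.
  by move=> i; rewrite leq_eqVlt ltnS => /orP[/eqP->|]; [left|right].
case: (step_cases t) => [Hw|hpos].
  split; first by move=> i /Hi[->//|hi] hYi; rewrite Hw; exact: He hi hYi.
  split.
    rewrite Hw => hyl i /Hi[->|hi]; last exact: HL hyl i hi.
    rewrite Hw; split; first by move=> _; exact: lexx.
    by move=> h'; move: (lt_trans hyl h'); rewrite ltxx.
  rewrite Hw => hyl i /Hi[->|hi]; last exact: HR hyl i hi.
  rewrite Hw; split; first by move=> _; exact: lexx.
  by move=> h'; move: (lt_trans hyl h'); rewrite ltxx.
have hns := @not_s _ _ hpos.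
set w := Y t.+1 in hpos *.
set y := Y t in hpos hns He HL HR *.
split.
  move=> i /Hi[->//|hi] hYi; by have := He i hi hYi.
case: (ltgtP y s) => [hyl|hyr|hye]; last by [].
- have hyw := @up_of _ _ hyl hpos.
  split.
    move=> hws i /Hi[->|hi].
      split; first by move=> _; exact: lexx.
      by move=> h'; move: (lt_trans hws h'); rewrite ltxx.
    have [h1 h2] := HL hyl i hi; split.
      by move=> /h1 h; exact: le_trans h (ltW hyw).
    move=> /h2 [q [m [h3 h4 h5 h6]]]; exists q, m; split => //.
    exact: le_trans h5 (ltW hyw).
  move=> hsw i /Hi[->|hi].
    split; first by move=> _; exact: lexx.
    by move=> h'; move: (lt_trans hsw h'); rewrite ltxx.
  have [h1 h2] := HL hyl i hi; split.
    move=> /h2 [q [m [hsq hqi hmy hD]]].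
    rewrite leNgt; apply/negP => hwi.
    exact: (@crossX _ _ _ _ hmy (lt_trans hyl hsq) (le_trans hqi (ltW hwi)) hpos hD).
  by move=> /h1 hiy; exists y, w; split.
- have hwy := @down_of _ _ hyr hpos.
  split.
    move=> hws i /Hi[->|hi].
      split; first by move=> _; exact: lexx.
      by move=> h'; move: (lt_trans hws h'); rewrite ltxx.
    have [h1 h2] := HR hyr i hi; split.
      move=> /h2 [p [M [hip hps hyM hD]]].
      rewrite leNgt; apply/negP => hwi.
      exact: (@crossX _ _ _ _ (ltW (lt_le_trans hwi hip)) (lt_trans hps hyr) hyM hD hpos).
    by move=> /h1 hyi; exists y, w; split.
  move=> hsw i /Hi[->|hi].
    split; first by move=> _; exact: lexx.
    by move=> h'; move: (lt_trans hsw h'); rewrite ltxx.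
  have [h1 h2] := HR hyr i hi; split.
    by move=> /h1 h; exact: le_trans (ltW hwy) h.
  move=> /h2 [p [M [h3 h4 h5 h6]]]; exists p, M; split => //.
  exact: le_trans (ltW hwy) h5.
Qed.

Lemma InvT t : Inv t.
Proof. elim: t => [|t IH]; [exact: Inv0 | exact: InvS]. Qed.

Lemma noReturn t i w : (i <= t)%N -> 0 < D w (Y t) -> Y i <> w.
Proof.
move=> hi hpos hE.
have [He [HL HR]] := InvT t.
have hns := @not_s _ _ hpos.
case: (ltgtP (Y t) s) => [hyl|hyr|hye]; last by [].
- have hyw := @up_of _ _ hyl hpos.
  case: (ltgtP (Y i) s) => [hil|hir|hie].
  + have := (HL hyl i hi).1 hil; rewrite hE => h.
    by move: (le_lt_trans h hyw); rewrite ltxx.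
  + have [q [m [hsq hqi hmy hD]]] := (HL hyl i hi).2 hir.
    rewrite hE in hqi.
    exact: (@crossX _ _ _ _ hmy (lt_trans hyl hsq) hqi hpos hD).
  + by have := He i hi hie.
- have hwy := @down_of _ _ hyr hpos.
  case: (ltgtP (Y i) s) => [hil|hir|hie].
  + have [p [M [hip hps hyM hD]]] := (HR hyr i hi).2 hil.
    rewrite hE in hip.
    exact: (@crossX _ _ _ _ hip (lt_trans hps hyr) hyM hD hpos).
  + have := (HR hyr i hi).1 hir; rewrite hE => h.
    by move: (lt_le_trans hwy h); rewrite ltxx.
  + by have := He i hi hie.
Qed.


Definition V T : {set X} := [set v | [exists i : 'I_T.+1, Y i == v]].

Lemma V_sub T : V T \subset V T.+1.
Proof.
apply/fintype.subsetP => v; rewrite !inE => /existsP[i /eqP <-].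
by apply/existsP; exists (widen_ord (leqnSn _) i).
Qed.

Lemma V_last T : Y T \in V T.
Proof. by rewrite inE; apply/existsP; exists ord_max. Qed.

Lemma V_notin T : 0 < D (xs T) (Y T) -> Y T.+1 \notin V T.
Proof.
move=> hpos; have hY : Y T.+1 = xs T by rewrite /= hpos.
apply/negP; rewrite inE => /existsP[i /eqP hi].
have hiT : (i <= T)%N by rewrite -ltnS ltn_ord.
by apply: (@noReturn T i (xs T) hiT hpos); rewrite hi hY.
Qed.

Lemma sum_bound T :
  \sum_(0 <= t < T) D (xs t) (Y t) + Dm <= Dm * (#|V T|)%:R.
Proof.
have hD0 := Dm_ge0.
elim: T => [|T IH].
  rewrite big_geq // add0r.
  have h : (1 <= #|V 0|)%N by apply/card_gt0P; exists (Y 0); exact: V_last.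
  rewrite -{1}(mulr1 Dm); apply: ler_wpM2l => //; by rewrite ler1n.
rewrite big_nat_recr //=.
have hsub := subset_leq_card (V_sub T).
case: (boolP (0 < D (xs T) (Y T))) => hpos.
  have hcard : (#|V T|.+1 <= #|V T.+1|)%N.
    have := cardsU1 (Y T.+1) (V T); rewrite V_notin // add1n => <-.
    apply: subset_leq_card; apply/fintype.subsetP => v /setU1P [->|hv].
      exact: V_last.
    exact: (fintype.subsetP (V_sub T)) _ hv.
  have hm : Dm * (#|V T|.+1)%:R <= Dm * (#|V T.+1|)%:R.
    by apply: ler_wpM2l => //; rewrite ler_nat.
  rewrite -natr1 mulrDr mulr1 in hm.
  have hle := D_le (xs T) (Y T).
  apply: le_trans hm.
  rewrite -addrA (addrC (D _ _)) addrA.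
  by apply: lerD.
have hle : D (xs T) (Y T) <= 0 by rewrite leNgt.
have hm : Dm * (#|V T|)%:R <= Dm * (#|V T.+1|)%:R.
  by apply: ler_wpM2l => //; rewrite ler_nat.
apply: le_trans hm; apply: le_trans IH.
rewrite -addrA (addrC (D _ _)) addrA.
by rewrite gerDl.
Qed.

Lemma final_bound T :
  \sum_(0 <= t < T.+1) D (xs t) (Y t) <= Dm * (#|X|)%:R.
Proof.
have h := sum_bound T.+1.
have hc : Dm * (#|V T.+1|)%:R <= Dm * (#|X|)%:R.
  by apply: ler_wpM2l; [exact: Dm_ge0 | rewrite ler_nat; exact: max_card].
have := le_trans h hc.
apply: le_trans; rewrite lerDl; exact: Dm_ge0.
Qed.

End Fess.
End Game.

Theorem proposition6 (R : realType) (dX dZ : Order.disp_t)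
  (X : finOrderType dX) (Z : orderType dZ)
  (a : X -> X -> Z) (Pi : X -> Z -> R) :
  agg_symmetric a -> agg_monotone a ->
  quasiconcave Pi -> quasisubmodular Pi ->
  (exists xs : X, fESS a Pi xs) ->
  no_money_pump a Pi.
Proof.
move=> hsym hmon hqc hqs [s hf].
exists (@Dm R dX dZ X Z a Pi * (#|X|)%:R); split.
  by apply: mulr_ge0; [exact: Dm_ge0 | exact: ler0n].
move=> y0 xs; apply: esup_le_aux => T; rewrite lee_fin.
by apply: final_bound.
Qed.
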